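(* Let $S$ be a semigroup and let $a_1,a_2,\dotsc$ be a sequence in $S$. If the set $\mathrm{FS}(a_1,a_2,\dotsc)$ is infinite, then it is a proper IP set; in particular, every superset of such a set is a proper IP set.
   Context: Semigroups are written additively but are not assumed commutative. For a sequence $a_1,a_2,\dotsc$ in a semigroup, $\mathrm{FS}(a_1,a_2,\dotsc):=\{a_{i_1}+\dotsb+a_{i_m} : m\ge 1,\ i_1<\dotsb<i_m\}$, and for a natural number $n$, $\mathrm{FS}(a_1,\dotsc,a_n):=\{a_{i_1}+\dotsb+a_{i_m} : m\ge1,\ i_1<\dotsb<i_m\le n\}$. A subset of a semigroup is a proper IP set if it contains $\mathrm{FS}(b_1,b_2,\dotsc)$ for some bijective (i.e. injective) sequence $b_1,b_2,\dotsc$ in the semigroup. *)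

(* Defs.v *)
From Stdlib Require Import List Arith.
Import ListNotations.

(* A semigroup is represented by a carrier S with a binary operation op
   (written additively in the paper, not assumed commutative); associativity
   is an explicit hypothesis of the theorem. *)

Fixpoint incr_from (i : nat) (l : list nat) : Prop :=
  match l with
  | [] => True
  | j :: l' => i < j /\ incr_from j l'
  end.

(* The sum a_{i0} + a_{i1} + ... + a_{ik} (left-nested; by associativity the
   bracketing is irrelevant), with indices in the given order. *)
Definition seq_sum {S : Type} (op : S -> S -> S) (a : nat -> S)
  (i0 : nat) (l : list nat) : S :=
  fold_left (fun acc i => op acc (a i)) l (a i0).

(* FS(a_1, a_2, ...): all finite sums a_{i_1} + ... + a_{i_m}, m >= 1,
   i_1 < ... < i_m.  (Sequences are indexed from 0 here.) *)
Definition FS {S : Type} (op : S -> S -> S) (a : nat -> S) (x : S) : Prop :=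
  exists (i0 : nat) (l : list nat), incr_from i0 l /\ x = seq_sum op a i0 l.

Definition finite_set {S : Type} (A : S -> Prop) : Prop :=
  exists l : list S, forall x, A x -> In x l.

Definition proper_IP {S : Type} (op : S -> S -> S) (A : S -> Prop) : Prop :=
  exists b : nat -> S, (forall m n, b m = b n -> m = n) /\
    (forall x, FS op b x -> A x).

(* Main.v *)
Require Import Defs.
From Stdlib Require Import List Arith Lia Classical ClassicalEpsilon.
Import ListNotations.

Lemma fold_assoc {T} (op:T->T->T) (assoc: forall x y z, op x (op y z) = op (op x y) z) (a:nat->T) :
  forall l x y, fold_left (fun acc i => op acc (a i)) l (op x y)
   = op x (fold_left (fun acc i => op acc (a i)) l y).
Proof. induction l as [|j l IH]; intros x y; simpl. reflexivity. rewrite <- assoc. apply IH. Qed.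

Lemma seq_sum_cons {T} (op:T->T->T) (assoc: forall x y z, op x (op y z) = op (op x y) z) (a:nat->T) i j l :
  seq_sum op a i (j::l) = op (a i) (seq_sum op a j l).
Proof. unfold seq_sum; simpl; apply fold_assoc; auto. Qed.

Lemma seq_sum_app {T} (op:T->T->T) (assoc: forall x y z, op x (op y z) = op (op x y) z) (a:nat->T) i l1 j l2 :
  seq_sum op a i (l1 ++ j :: l2) = op (seq_sum op a i l1) (seq_sum op a j l2).
Proof. unfold seq_sum. rewrite fold_left_app. simpl. apply fold_assoc; auto. Qed.

Fixpoint lastidx (i : nat) (l : list nat) : nat :=
  match l with [] => i | j :: l' => lastidx j l' end.

Lemma lastidx_ge : forall l i, incr_from i l -> i <= lastidx i l.
Proof. induction l; simpl; intros i H; [lia| destruct H as [H1 H2]; specialize (IHl a H2); lia]. Qed.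

Lemma incr_app : forall l1 i j l2, incr_from i l1 -> lastidx i l1 < j -> incr_from j l2 ->
  incr_from i (l1 ++ j :: l2).
Proof.
  induction l1; simpl; intros i j l2 H1 H2 H3. split; auto.
  destruct H1; split; auto.
Qed.

Definition tailFS {T} (op:T->T->T) (a:nat->T) m (x:T) : Prop :=
  exists i0 l, m <= i0 /\ incr_from i0 l /\ x = seq_sum op a i0 l.

Lemma tail_step {T} (op:T->T->T) (assoc: forall x y z, op x (op y z) = op (op x y) z) (a:nat->T) m :
  finite_set (tailFS op a (Datatypes.S m)) -> finite_set (tailFS op a m).
Proof.
  intros [L HL]. exists (a m :: L ++ map (op (a m)) L).
  intros x [i0 [l [Hm [Hi Hx]]]].
  destruct (Nat.eq_dec i0 m) as [->|Hne].
  - destruct l as [|j l'].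
    + left. subst x. reflexivity.
    + right. apply in_or_app; right. subst x. rewrite seq_sum_cons by auto. apply in_map.
      apply HL. exists j, l'. destruct Hi. repeat split; auto; lia.
  - right. apply in_or_app; left. apply HL. exists i0, l. repeat split; auto; lia.
Qed.

Lemma tail_fin {T} (op:T->T->T) (assoc: forall x y z, op x (op y z) = op (op x y) z) (a:nat->T) :
  forall m, finite_set (tailFS op a m) -> finite_set (FS op a).
Proof.
  induction m; intros H.
  - destruct H as [L HL]; exists L; intros x [i0 [l [Hi Hx]]]; apply HL; exists i0, l; repeat split; auto; lia.
  - apply IHm, tail_step, H; auto.
Qed.

Lemma step {T} (op:T->T->T) (assoc: forall x y z, op x (op y z) = op (op x y) z) (a:nat->T) :
  ~ finite_set (FS op a) -> forall m (L : list T), exists p : nat * list nat,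
   m <= fst p /\ incr_from (fst p) (snd p) /\ ~ In (seq_sum op a (fst p) (snd p)) L.
Proof.
  intros Hinf m L. apply NNPP; intro Hn. apply Hinf. apply (tail_fin op assoc a m).
  exists L. intros x [i0 [l [H1 [H2 H3]]]]. subst x. apply NNPP; intro Hnin.
  apply Hn. exists (i0, l). simpl; auto.
Qed.

Definition stF {T} (op:T->T->T) (a:nat->T) (ch : nat -> list T -> nat * list nat) : nat -> nat * list T :=
  fix st n := match n with
  | 0 => (0, [])
  | Datatypes.S n' =>
      let p := ch (fst (st n')) (snd (st n')) in
      (Datatypes.S (lastidx (fst p) (snd p)), seq_sum op a (fst p) (snd p) :: snd (st n'))
  end.

Lemma main_ch {T} (op:T->T->T) (assoc: forall x y z, op x (op y z) = op (op x y) z) (a:nat->T)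
  (ch : nat -> list T -> nat * list nat)
  (Hch : forall m L, m <= fst (ch m L) /\ incr_from (fst (ch m L)) (snd (ch m L)) /\
          ~ In (seq_sum op a (fst (ch m L)) (snd (ch m L))) L) :
  proper_IP op (FS op a).
Proof.
  set (st := stF op a ch).
  set (b := fun n => let p := ch (fst (st n)) (snd (st n)) in seq_sum op a (fst p) (snd p)).
  assert (H1 : forall n, fst (st n) <= fst (st (Datatypes.S n))).
  { intro n. change (fst (st n) <= Datatypes.S (lastidx (fst (ch (fst (st n)) (snd (st n))))
        (snd (ch (fst (st n)) (snd (st n)))))).
    destruct (Hch (fst (st n)) (snd (st n))) as [A [B _]].
    pose proof (lastidx_ge _ _ B). lia. }
  assert (H2 : forall n k, n <= k -> fst (st n) <= fst (st k)).
  { intros n k Hk. induction Hk; [lia| specialize (H1 m); lia]. }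
  assert (H3 : forall n, snd (st (Datatypes.S n)) = b n :: snd (st n)) by reflexivity.
  assert (H4 : forall n k, k < n -> In (b k) (snd (st n))).
  { induction n; intros k Hk; [lia|]. rewrite H3.
    destruct (Nat.eq_dec k n) as [->|]; [left; auto| right; apply IHn; lia]. }
  assert (H5 : forall n, ~ In (b n) (snd (st n))).
  { intro n. apply (Hch (fst (st n)) (snd (st n))). }
  exists b. split.
  - intros m n E. destruct (lt_eq_lt_dec m n) as [[Hl|Hl]|Hl]; auto.
    + exfalso. apply (H5 n). rewrite <- E. apply H4; auto.
    + exfalso. apply (H5 m). rewrite E. apply H4; auto.
  - assert (H6 : forall l j0, incr_from j0 l -> exists i0 li, fst (st j0) <= i0 /\
        incr_from i0 li /\ seq_sum op a i0 li = seq_sum op b j0 l).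
    { induction l as [|j1 l IH]; intros j0 H.
      - destruct (Hch (fst (st j0)) (snd (st j0))) as [A [B _]].
        eexists; eexists; split; [exact A| split; [exact B| reflexivity]].
      - destruct H as [Hlt Hinc]. destruct (IH j1 Hinc) as [i1 [li1 [C1 [C2 C3]]]].
        destruct (Hch (fst (st j0)) (snd (st j0))) as [A [B _]].
        exists (fst (ch (fst (st j0)) (snd (st j0)))),
               (snd (ch (fst (st j0)) (snd (st j0))) ++ i1 :: li1).
        split; [exact A|split].
        + apply incr_app; auto.
          pose proof (H2 (Datatypes.S j0) j1 Hlt).
          change (fst (st (Datatypes.S j0))) with (Datatypes.S (lastidx (fst (ch (fst (st j0)) (snd (st j0))))
            (snd (ch (fst (st j0)) (snd (st j0)))))) in H. lia.
        + rewrite seq_sum_app by auto. rewrite seq_sum_cons by auto. rewrite C3. reflexivity. }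
    intros x [j0 [l [Hi Hx]]]. destruct (H6 l j0 Hi) as [i0 [li [_ [C2 C3]]]].
    exists i0, li. split; auto. congruence.
Qed.

Theorem lemma1p3 (S : Type) (op : S -> S -> S)
  (op_assoc : forall x y z, op x (op y z) = op (op x y) z)
  (a : nat -> S) :
  ~ finite_set (FS op a) ->
  proper_IP op (FS op a) /\
  (forall B : S -> Prop, (forall x, FS op a x -> B x) -> proper_IP op B).
Proof.
  intro Hinf.
  assert (HP : proper_IP op (FS op a)).
  { pose proof (step op op_assoc a Hinf) as Hs.
    apply (main_ch op op_assoc a (fun m L => proj1_sig (constructive_indefinite_description _ (Hs m L)))).
    intros m L. exact (proj2_sig (constructive_indefinite_description _ (Hs m L))). }
  split; [exact HP|]. intros B HB. destruct HP as [b [Hb1 Hb2]]. exists b; split; auto.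
Qed.
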